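(* For the least-squares approximate policy iteration sequence described in the context, for every $k\ge1$, $$\|J_k-J^{\mu_k}\|_\infty\le \alpha^{m+H-1}\delta_{FV}\,\|J_{k-1}-J^{\mu_{k-1}}\|_\infty+\frac{\alpha^m+\alpha^{m+H-1}}{1-\alpha}\delta_{FV}+\delta_{app}+\delta_{FV}\epsilon_{PE}.$$ Consequently, writing $\beta:=\alpha^{m+H-1}\delta_{FV}$ and $\tau:=\frac{\alpha^m+\alpha^{m+H-1}}{1-\alpha}\delta_{FV}+\delta_{app}+\delta_{FV}\epsilon_{PE}$, if $\beta<1$ then $\|J_k-J^{\mu_k}\|_\infty\le\beta^k\|J_0-J^{\mu_0}\|_\infty+\frac{\tau}{1-\beta}$ for all $k\ge0$.
   Context: Consider a Markov decision process with finite state space $S$, finite action space $A$, transition probabilities $P_{ij}(a)$, rewards $r(s,a)\in[0,1]$, and discount factor $\alpha\in(0,1)$. A (deterministic stationary) policy is a map $\mu:S\to A$; its value is $J^\mu(s)=E[\sum_{t\ge0}\alpha^t r(s_t,\mu(s_t))\mid s_0=s]$, and $J^*(s)=\max_\mu J^\mu(s)$. For a policy $\mu$, $(T_\mu J)(s)=r(s,\mu(s))+\alpha\sum_j P_{sj}(\mu(s))J(j)$; the Bellman operator is $(TJ)(s)=\max_{a\in A}\{r(s,a)+\alpha\sum_j P_{sj}(a)J(j)\}$; powers denote repeated application. $\|\cdot\|_\infty$ denotes the max norm and the induced matrix norm. Least-squares approximate policy iteration: fix integers $m\ge1$, $H\ge1$, constants $\epsilon_{LA},\epsilon_{PE}\ge0$,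 a feature matrix $\Phi\in\mathbb{R}^{|S|\times d}$ whose row $i$ is $\phi(i)^\top$, and subsets $D_k\subseteq S$ ($k\ge0$) such that $\{\phi(i)\}_{i\in D_k}$ has rank $d$. Let $\Phi_{D_k}$ be the submatrix of $\Phi$ with rows indexed by $D_k$, $P_k\in\{0,1\}^{|D_k|\times|S|}$ the matrix selecting the coordinates in $D_k$, and $\mathcal{M}_{k+1}:=\Phi(\Phi_{D_k}^\top\Phi_{D_k})^{-1}\Phi_{D_k}^\top P_k$ for $k\ge0$. Start with arbitrary $J_0\in\mathbb{R}^{|S|}$ and an arbitrary policy $\mu_0$. For each $k\ge0$: $\mu_{k+1}$ is any policy with $\|T^HJ_k-T_{\mu_{k+1}}T^{H-1}J_k\|_\infty\le\epsilon_{LA}$; $w_{k+1}\in\mathbb{R}^{|S|}$ is a noise vector with $w_{k+1}(i)=0$ for $i\notin D_k$ and $\|w_{k+1}\|_\infty\le\epsilon_{PE}$; and $J_{k+1}=\mathcal{M}_{k+1}(T^m_{\mu_{k+1}}T^{H-1}J_k+w_{k+1})$. Define $\delta_{FV}:=\sup_{k\ge1}\|\mathcal{M}_k\|_\infty$ (assumed finite) and $\delta_{app}:=\sup_{k\ge1}\sup_{\mu}\|\mathcal{M}_kJ^\mu-J^\mu\|_\infty$, the inner supremum over all policies. *)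

(* Defs.v *)
From HB Require Import structures.
From mathcomp Require Import all_boot all_order all_algebra.
From mathcomp Require Import all_classical all_reals all_analysis.
Set Implicit Arguments. Unset Strict Implicit. Unset Printing Implicit Defensive.
Import Order.TTheory GRing.Theory Num.Theory.
Local Open Scope ring_scope.

Definition vnorm {R : realType} {n : nat} (v : 'cV[R]_n) : R :=
  \big[Num.max/0]_(i < n) `|v i 0|.

Definition mnorm {R : realType} {n p : nat} (M : 'M[R]_(n, p)) : R :=
  \big[Num.max/0]_(i < n) \sum_(j < p) `|M i j|.

(* maximum over the (finite, nonempty in practice) action set *)
Definition maxA {R : realType} {A : finType} (f : A -> R) : R :=
  if [pick a : A] is Some a0 then \big[Num.max/f a0]_(a : A) f a else 0.

Definition Tpol {R : realType} {n : nat} {A : finType}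
  (P : 'I_n -> A -> 'I_n -> R) (r : 'I_n -> A -> R) (alpha : R)
  (mu : 'I_n -> A) (J : 'cV[R]_n) : 'cV[R]_n :=
  \col_s (r s (mu s) + alpha * \sum_(j < n) P s (mu s) j * J j 0).

Definition Tbell {R : realType} {n : nat} {A : finType}
  (P : 'I_n -> A -> 'I_n -> R) (r : 'I_n -> A -> R) (alpha : R)
  (J : 'cV[R]_n) : 'cV[R]_n :=
  \col_s maxA (fun a => r s a + alpha * \sum_(j < n) P s a j * J j 0).

Definition Pmat {R : realType} {n : nat} {A : finType}
  (P : 'I_n -> A -> 'I_n -> R) (mu : 'I_n -> A) : 'M[R]_n :=
  \matrix_(s, j) P s (mu s) j.
Definition rvec {R : realType} {n : nat} {A : finType}
  (r : 'I_n -> A -> R) (mu : 'I_n -> A) : 'cV[R]_n :=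
  \col_s r s (mu s).

(* J^mu(s) = E[sum_t alpha^t r(s_t, mu(s_t)) | s_0 = s]
          = sum_{t>=0} alpha^t (P_mu^t r_mu)(s)  (series limit) *)
Definition Jpol {R : realType} {n : nat} {A : finType}
  (P : 'I_n -> A -> 'I_n -> R) (r : 'I_n -> A -> R) (alpha : R)
  (mu : 'I_n -> A) : 'cV[R]_n :=
  \col_s limn (fun N : nat =>
     \sum_(t < N) alpha ^+ t * ((Pmat P mu ^+ t) *m rvec r mu) s 0).

(* Phi_D : rows of Phi indexed by D (in the enumeration order of D) *)
Definition PhiD {R : realType} {n d : nat} (Phi : 'M[R]_(n, d))
  (D : {set 'I_n}) : 'M[R]_(#|D|, d) :=
  \matrix_(i, j) Phi (enum_val i) j.

Definition SelD {R : realType} {n : nat} (D : {set 'I_n}) : 'M[R]_(#|D|, n) :=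
  \matrix_(i, j) (enum_val i == j)%:R.

Definition Mproj {R : realType} {n d : nat} (Phi : 'M[R]_(n, d))
  (D : {set 'I_n}) : 'M[R]_n :=
  Phi *m invmx ((PhiD Phi D)^T *m PhiD Phi D) *m (PhiD Phi D)^T *m (SelD D : 'M[R]_(#|D|, n)).

(* Main.v *)
Require Import Defs.
From HB Require Import structures.
From mathcomp Require Import all_boot all_order all_algebra.
From mathcomp Require Import all_classical all_reals all_analysis.
From mathcomp Require Import ring lra zify.
Import Order.TTheory GRing.Theory Num.Theory.
Import numFieldNormedType.Exports.
Local Open Scope ring_scope.
Local Open Scope classical_set_scope.

Lemma vnorm_ge0 {R : realType} {n} (v : 'cV[R]_n) : 0 <= vnorm v.
Proof. rewrite /vnorm; elim/big_ind: _ => // x y hx hy; by rewrite le_max hx. Qed.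

Lemma vnorm_ge {R : realType} {n} (v : 'cV[R]_n) i : `|v i 0| <= vnorm v.
Proof. exact: (le_bigmax 0 (fun i => `|v i 0|) i). Qed.

Lemma vnorm_le {R : realType} {n} (v : 'cV[R]_n) (c : R) :
  0 <= c -> (forall i, `|v i 0| <= c) -> vnorm v <= c.
Proof. by move=> c0 h; apply: bigmax_le. Qed.

Lemma vnorm_tri {R : realType} {n} (u v : 'cV[R]_n) : vnorm (u + v) <= vnorm u + vnorm v.
Proof.
apply: vnorm_le; first by rewrite addr_ge0 // vnorm_ge0.
move=> i; rewrite mxE; apply: (le_trans (ler_normD _ _)).
by apply: lerD; apply: vnorm_ge.
Qed.

Lemma vnorm_mul {R : realType} {n} (M : 'M[R]_n) (v : 'cV[R]_n) :
  vnorm (M *m v) <= mnorm M * vnorm v.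
Proof.
apply: vnorm_le; first by rewrite mulr_ge0 ?vnorm_ge0 //;
  rewrite /mnorm; elim/big_ind: _ => // [x y hx hy|i _]; [by rewrite le_max hx|
  by apply: sumr_ge0 => *].
move=> i; rewrite mxE; apply: (le_trans (ler_norm_sum _ _ _)).
apply: (@le_trans _ _ ((\sum_j `|M i j|) * vnorm v)).
  rewrite mulr_suml; apply: ler_sum => j _; rewrite normrM.
  by apply: ler_wpM2l => //; apply: vnorm_ge.
apply: ler_wpM2r; first exact: vnorm_ge0.
exact: (le_bigmax 0 (fun i => \sum_j `|M i j|) i).
Qed.

Lemma maxA_ge {R : realType} {A : finType} (f : A -> R) a : f a <= Defs.maxA f.
Proof.
rewrite /Defs.maxA; case: pickP => [a1 _|h]; last by have := h a.
exact: (le_bigmax _ f a).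
Qed.

Lemma maxA_le {R : realType} {A : finType} (a0 : A) (f : A -> R) (c : R) :
  (forall a, f a <= c) -> Defs.maxA f <= c.
Proof.
move=> h; rewrite /Defs.maxA; case: pickP => [a1 _|h']; last by have := h' a0.
by apply: bigmax_le.
Qed.

Lemma maxA_lip {R : realType} {A : finType} (a0 : A) (f g : A -> R) (c : R) :
  (forall a, `|f a - g a| <= c) -> `|Defs.maxA f - Defs.maxA g| <= c.
Proof.
move=> h.
have h1 : Defs.maxA g <= Defs.maxA f + c.
  apply: (maxA_le a0) => a; have := maxA_ge f a; move: (h a).
  rewrite ler_norml => /andP[? ?] ?; lra.
have h2 : Defs.maxA f <= Defs.maxA g + c.
  apply: (maxA_le a0) => a; have := maxA_ge g a; move: (h a).
  rewrite ler_norml => /andP[? ?] ?; lra.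
rewrite ler_norml; apply/andP; split; lra.
Qed.

Lemma maxA_box {R : realType} {A : finType} (a0 : A) (f : A -> R) (lo hi : R) :
  (forall a, lo <= f a <= hi) -> lo <= Defs.maxA f <= hi.
Proof.
move=> h; apply/andP; split.
  by case/andP: (h a0) => h1 _; apply: (le_trans h1 (maxA_ge _ a0)).
by apply: (maxA_le a0) => a; case/andP: (h a).
Qed.

Lemma wavg_lip {R : realType} {n} {p : 'I_n -> R} (hp0 : forall j, 0 <= p j)
  (hp1 : \sum_j p j = 1) (x y : 'cV[R]_n) :
  `|\sum_j p j * x j 0 - \sum_j p j * y j 0| <= vnorm (x - y).
Proof.
rewrite -sumrB; apply: (le_trans (ler_norm_sum _ _ _)).
apply: (@le_trans _ _ (\sum_j p j * vnorm (x - y))).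
  apply: ler_sum => j _; rewrite -mulrBr normrM ger0_norm //.
  apply: ler_wpM2l => //; have := vnorm_ge (x - y) j; by rewrite !mxE.
by rewrite -mulr_suml hp1 mul1r.
Qed.

Lemma wavg_box {R : realType} {n} {p : 'I_n -> R} (hp0 : forall j, 0 <= p j)
  (hp1 : \sum_j p j = 1) (x : 'cV[R]_n) (c : R) :
  (forall j, 0 <= x j 0 <= c) -> 0 <= \sum_j p j * x j 0 <= c.
Proof.
move=> hx; apply/andP; split.
  by apply: sumr_ge0 => j _; case/andP: (hx j) => h1 _; rewrite mulr_ge0.
apply: (@le_trans _ _ (\sum_j p j * c)).
  by apply: ler_sum => j _; case/andP: (hx j) => _ h2; rewrite ler_wpM2l.
by rewrite -mulr_suml hp1 mul1r.
Qed.

Lemma Tpol_contr {R : realType} {n} {A : finType} (P : 'I_n -> A -> 'I_n -> R)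
  (r : 'I_n -> A -> R) (alpha : R)
  (hP0 : forall s a j, 0 <= P s a j) (hP1 : forall s a, \sum_(j < n) P s a j = 1)
  (ha : 0 <= alpha) mu (x y : 'cV[R]_n) :
  vnorm (Tpol P r alpha mu x - Tpol P r alpha mu y) <= alpha * vnorm (x - y).
Proof.
apply: vnorm_le; first by rewrite mulr_ge0 ?vnorm_ge0.
move=> s; rewrite !mxE.
have -> : r s (mu s) + alpha * (\sum_j P s (mu s) j * x j 0) -
    (r s (mu s) + alpha * (\sum_j P s (mu s) j * y j 0)) =
    alpha * ((\sum_j P s (mu s) j * x j 0) - (\sum_j P s (mu s) j * y j 0)) by ring.
rewrite normrM ger0_norm //; apply: ler_wpM2l => //.
exact: wavg_lip.
Qed.

Lemma Tbell_contr {R : realType} {n} {A : finType} (P : 'I_n -> A -> 'I_n -> R)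
  (r : 'I_n -> A -> R) (alpha : R)
  (hP0 : forall s a j, 0 <= P s a j) (hP1 : forall s a, \sum_(j < n) P s a j = 1)
  (ha : 0 <= alpha) (fa : 'I_n -> A) (x y : 'cV[R]_n) :
  vnorm (Tbell P r alpha x - Tbell P r alpha y) <= alpha * vnorm (x - y).
Proof.
apply: vnorm_le; first by rewrite mulr_ge0 ?vnorm_ge0.
move=> s; rewrite !mxE; apply: (maxA_lip (fa s)) => a.
have -> : r s a + alpha * (\sum_j P s a j * x j 0) -
    (r s a + alpha * (\sum_j P s a j * y j 0)) =
    alpha * ((\sum_j P s a j * x j 0) - (\sum_j P s a j * y j 0)) by ring.
rewrite normrM ger0_norm //; apply: ler_wpM2l => //.
exact: wavg_lip.
Qed.

Lemma iter_contr {R : realType} {n} (T : 'cV[R]_n -> 'cV[R]_n) (alpha : R)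
  (ha : 0 <= alpha) (hT : forall x y, vnorm (T x - T y) <= alpha * vnorm (x - y))
  k x y : vnorm (iter k T x - iter k T y) <= alpha ^+ k * vnorm (x - y).
Proof.
elim: k => [|k IH]; first by rewrite expr0 mul1r.
rewrite !iterS exprS -mulrA; apply: (le_trans (hT _ _)).
by apply: ler_wpM2l.
Qed.

Definition inbox {R : realType} {n} (c : R) (x : 'cV[R]_n) := forall i, 0 <= x i 0 <= c.

Lemma B_fix {R : realType} {alpha : R} : 0 < alpha < 1 ->
  1 + alpha * (1 - alpha)^-1 = (1 - alpha)^-1.
Proof.
move=> /andP[h0 h1]; have hne : 1 - alpha != 0 by rewrite subr_eq0 gt_eqF.
by field.
Qed.

Lemma Tpol_box {R : realType} {n} {A : finType} (P : 'I_n -> A -> 'I_n -> R)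
  (r : 'I_n -> A -> R) (alpha : R)
  (hP0 : forall s a j, 0 <= P s a j) (hP1 : forall s a, \sum_(j < n) P s a j = 1)
  (hr : forall s a, 0 <= r s a <= 1)
  (ha : 0 < alpha < 1) mu x :
  inbox (1 - alpha)^-1 x -> inbox (1 - alpha)^-1 (Tpol P r alpha mu x).
Proof.
move=> hx s; rewrite mxE; have := wavg_box (hP0 s (mu s)) (hP1 s (mu s)) x _ hx.
case/andP => h1 h2; case/andP: (hr s (mu s)) => h3 h4.
have hb := B_fix ha; case/andP: ha => ha0 ha1.
apply/andP; split; first by rewrite addr_ge0 // mulr_ge0 // ltW.
rewrite -hb lerD // ler_wpM2l // ltW //.
Qed.

Lemma Tbell_box {R : realType} {n} {A : finType} (P : 'I_n -> A -> 'I_n -> R)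
  (r : 'I_n -> A -> R) (alpha : R)
  (hP0 : forall s a j, 0 <= P s a j) (hP1 : forall s a, \sum_(j < n) P s a j = 1)
  (hr : forall s a, 0 <= r s a <= 1)
  (ha : 0 < alpha < 1) (fa : 'I_n -> A) x :
  inbox (1 - alpha)^-1 x -> inbox (1 - alpha)^-1 (Tbell P r alpha x).
Proof.
move=> hx s; rewrite mxE; apply: (maxA_box (fa s)) => a.
have := wavg_box (hP0 s a) (hP1 s a) x _ hx.
case/andP => h1 h2; case/andP: (hr s a) => h3 h4.
have hb := B_fix ha; case/andP: ha => ha0 ha1.
apply/andP; split; first by rewrite addr_ge0 // mulr_ge0 // ltW.
rewrite -hb lerD // ler_wpM2l // ltW //.
Qed.

Lemma iter_box {R : realType} {n} (T : 'cV[R]_n -> 'cV[R]_n) (c : R)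
  (hT : forall x, inbox c x -> inbox c (T x)) k x :
  inbox c x -> inbox c (iter k T x).
Proof. by move=> hx; elim: k => //= k IH; apply: hT. Qed.

Lemma box_dist {R : realType} {n} (c : R) (x y : 'cV[R]_n) :
  0 <= c -> inbox c x -> inbox c y -> vnorm (x - y) <= c.
Proof.
move=> c0 hx hy; apply: vnorm_le => // i; rewrite !mxE.
case/andP: (hx i) => ? ?; case/andP: (hy i) => ? ?.
rewrite ler_norml; apply/andP; split; lra.
Qed.

Definition Sseq {R : realType} {n} {A : finType} (P : 'I_n -> A -> 'I_n -> R)
  (r : 'I_n -> A -> R) (alpha : R) (mu : 'I_n -> A) (N : nat) : 'cV[R]_n :=
  \col_s \sum_(t < N) alpha ^+ t * ((Pmat P mu ^+ t) *m rvec r mu) s 0.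

Lemma Sseq_rec {R : realType} {n} {A : finType} (P : 'I_n -> A -> 'I_n -> R)
  (r : 'I_n -> A -> R) (alpha : R) mu N :
  Sseq P r alpha mu N.+1 = Tpol P r alpha mu (Sseq P r alpha mu N).
Proof.
apply/matrixP => s i; rewrite (ord1 i) !mxE big_ord_recl expr0 mul1r.
rewrite expr0 mul1mx mxE; congr (_ + _).
have mE : forall (M1 M2 : 'M[R]_n), M1 * M2 = M1 *m M2 by [].
under eq_bigr => t _ do rewrite /= /bump /= add1n (exprS (Pmat P mu)) mE -mulmxA (exprS alpha) mxE.
under [X in _ = alpha * X]eq_bigr => j _ do rewrite mxE big_distrr /=.
rewrite [RHS]big_distrr /=.
under [RHS]eq_bigr => j _ do rewrite big_distrr /=.
rewrite [RHS]exchange_big /=; apply: eq_bigr => t _.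
rewrite big_distrr /=; apply: eq_bigr => j _; rewrite !mxE; ring.
Qed.

Lemma Tpol_mono {R : realType} {n} {A : finType} (P : 'I_n -> A -> 'I_n -> R)
  (r : 'I_n -> A -> R) (alpha : R) (hP0 : forall s a j, 0 <= P s a j)
  (ha : 0 <= alpha) mu (x y : 'cV[R]_n) :
  (forall j, x j 0 <= y j 0) -> forall s, Tpol P r alpha mu x s 0 <= Tpol P r alpha mu y s 0.
Proof.
move=> hxy s; rewrite !mxE lerD2l ler_wpM2l //; apply: ler_sum => j _.
by rewrite ler_wpM2l.
Qed.

Lemma Sseq_facts {R : realType} {n} {A : finType} (P : 'I_n -> A -> 'I_n -> R)
  (r : 'I_n -> A -> R) (alpha : R)
  (hP0 : forall s a j, 0 <= P s a j) (hP1 : forall s a, \sum_(j < n) P s a j = 1)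
  (hr : forall s a, 0 <= r s a <= 1)
  (ha : 0 < alpha < 1) mu :
  (forall N, inbox (1 - alpha)^-1 (Sseq P r alpha mu N)) /\
  (forall N s, Sseq P r alpha mu N s 0 <= Sseq P r alpha mu N.+1 s 0).
Proof.
split.
  elim => [|N IH]; last by rewrite Sseq_rec; apply: Tpol_box.
  move=> s; rewrite mxE big_ord0 lexx /=; case/andP: ha => _ h1.
  by rewrite invr_ge0 subr_ge0 ltW.
have ha0 : 0 <= alpha by case/andP: ha => h _; exact: ltW.
elim => [|N IH] s.
  have z : forall j, Sseq P r alpha mu 0 j 0 = 0 by move=> j; rewrite mxE big_ord0.
  rewrite z Sseq_rec mxE; under eq_bigr do rewrite z mulr0.
  by rewrite big1_eq mulr0 addr0; case/andP: (hr s (mu s)).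
rewrite (Sseq_rec _ _ _ _ N.+1) {1}(Sseq_rec _ _ _ _ N); apply: (Tpol_mono _ _ _ hP0 ha0) => j; exact: IH.
Qed.

Lemma Jpol_cvg {R : realType} {n} {A : finType} (P : 'I_n -> A -> 'I_n -> R)
  (r : 'I_n -> A -> R) (alpha : R)
  (hP0 : forall s a j, 0 <= P s a j) (hP1 : forall s a, \sum_(j < n) P s a j = 1)
  (hr : forall s a, 0 <= r s a <= 1)
  (ha : 0 < alpha < 1) (mu : 'I_n -> A) (s : 'I_n) :
  (fun N => Sseq P r alpha mu N s 0) @ \oo --> Jpol P r alpha mu s 0.
Proof.
have [hb hnd] := Sseq_facts P r alpha hP0 hP1 hr ha mu.
set u := fun N => Sseq P r alpha mu N s 0.
have nd : nondecreasing_seq u by apply/nondecreasing_seqP => N; exact: hnd.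
have ub : has_ubound (range u).
  by exists (1 - alpha)^-1 => _ [N _ <-]; case/andP: (hb N s).
have c := nondecreasing_cvgn nd ub.
have e : u = (fun N => \sum_(t < N) alpha ^+ t * ((Pmat P mu ^+ t) *m rvec r mu) s 0).
  by apply/funext => N; rewrite /u mxE.
rewrite mxE -e; by rewrite (cvg_lim _ c).
Qed.

Lemma Jpol_box {R : realType} {n} {A : finType} (P : 'I_n -> A -> 'I_n -> R)
  (r : 'I_n -> A -> R) (alpha : R)
  (hP0 : forall s a j, 0 <= P s a j) (hP1 : forall s a, \sum_(j < n) P s a j = 1)
  (hr : forall s a, 0 <= r s a <= 1)
  (ha : 0 < alpha < 1) mu :
  inbox (1 - alpha)^-1 (Jpol P r alpha mu).
Proof.
have [hb _] := Sseq_facts P r alpha hP0 hP1 hr ha mu.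
move=> s; have c := Jpol_cvg P r alpha hP0 hP1 hr ha mu s.
apply/andP; split.
  by apply: (cvgr_to_ge c); apply: nearW => N; case/andP: (hb N s).
by apply: (cvgr_to_le c); apply: nearW => N; case/andP: (hb N s).
Qed.

Lemma Jpol_fix {R : realType} {n} {A : finType} (P : 'I_n -> A -> 'I_n -> R)
  (r : 'I_n -> A -> R) (alpha : R)
  (hP0 : forall s a j, 0 <= P s a j) (hP1 : forall s a, \sum_(j < n) P s a j = 1)
  (hr : forall s a, 0 <= r s a <= 1)
  (ha : 0 < alpha < 1) mu :
  Tpol P r alpha mu (Jpol P r alpha mu) = Jpol P r alpha mu.
Proof.
apply/matrixP => s i; rewrite (ord1 i).
have c1 : (fun N => Sseq P r alpha mu N.+1 s 0) @ \oo --> Jpol P r alpha mu s 0.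
  have := Jpol_cvg P r alpha hP0 hP1 hr ha mu s; by rewrite -cvg_shiftS.
have c2 : (fun N => Sseq P r alpha mu N.+1 s 0) @ \oo --> Tpol P r alpha mu (Jpol P r alpha mu) s 0.
  have -> : (fun N => Sseq P r alpha mu N.+1 s 0) =
     (fun N => r s (mu s) + alpha * \sum_j P s (mu s) j * Sseq P r alpha mu N j 0).
    by apply: funext => N; rewrite Sseq_rec mxE.
  rewrite mxE; apply: cvgD; first exact: cvg_cst.
  apply: cvgMl_tmp; apply: cvg_big => //; first exact: add_continuous.
  move=> j _; apply: cvgMl_tmp; exact: Jpol_cvg.
exact: (cvg_unique _ c2 c1).
Qed.

Lemma zmod_eq (V : zmodType) (a b c d : V) : a + b - c = a - d + (d - c) + b.
Proof. by rewrite (addrA (a - d)) subrK addrAC. Qed.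

Lemma iter_fix {T : Type} (f : T -> T) x k : f x = x -> iter k f x = x.
Proof. by move=> h; elim: k => //= k ->. Qed.

Lemma vnorm_sub {R : realType} {n} (u v : 'cV[R]_n) : vnorm (u - v) <= vnorm u + vnorm v.
Proof.
apply: vnorm_le; first by rewrite addr_ge0 // vnorm_ge0.
move=> i; rewrite !mxE; apply: (le_trans (ler_normB _ _)).
by apply: lerD; apply: vnorm_ge.
Qed.

Lemma mnorm_ge0 {R : realType} {n p} (M : 'M[R]_(n, p)) : 0 <= mnorm M.
Proof.
rewrite /mnorm; elim/big_ind: _ => // [x y hx hy|i _]; first by rewrite le_max hx.
by apply: sumr_ge0 => *.
Qed.


Theorem mainTheorem3 (R : realType) (nS d : nat) (A : finType)
  (P : 'I_nS -> A -> 'I_nS -> R) (r : 'I_nS -> A -> R) (alpha : R)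
  (hP0 : forall s a j, 0 <= P s a j)
  (hP1 : forall s a, \sum_(j < nS) P s a j = 1)
  (hr : forall s a, 0 <= r s a <= 1)
  (halpha : 0 < alpha < 1)
  (m H : nat) (hm : (1 <= m)%N) (hH : (1 <= H)%N)
  (eLA ePE : R) (heLA : 0 <= eLA) (hePE : 0 <= ePE)
  (Phi : 'M[R]_(nS, d)) (D : nat -> {set 'I_nS})
  (hD : forall k, \rank (PhiD Phi (D k)) = d)
  (J : nat -> 'cV[R]_nS) (mu : nat -> 'I_nS -> A) (w : nat -> 'cV[R]_nS)
  (hmu : forall k, vnorm (iter H (Tbell P r alpha) (J k)
            - Tpol P r alpha (mu k.+1) (iter H.-1 (Tbell P r alpha) (J k))) <= eLA)
  (hw0 : forall k i, i \notin D k -> w k.+1 i 0 = 0)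
  (hw : forall k, vnorm (w k.+1) <= ePE)
  (hJ : forall k, J k.+1 = Mproj Phi (D k) *m
          (iter m (Tpol P r alpha (mu k.+1)) (iter H.-1 (Tbell P r alpha) (J k))
           + w k.+1))
  (hFV : has_ubound (range (fun k : nat => mnorm (Mproj Phi (D k))))) :
  let dFV := sup (range (fun k : nat => mnorm (Mproj Phi (D k)))) in
  let dapp := sup [set x : R | exists (k : nat) (nu : 'I_nS -> A),
                 x = vnorm (Mproj Phi (D k) *m Jpol P r alpha nu - Jpol P r alpha nu)] in
  let beta := alpha ^+ (m + H - 1) * dFV in
  let tau := (alpha ^+ m + alpha ^+ (m + H - 1)) / (1 - alpha) * dFV
             + dapp + dFV * ePE in
  (forall k : nat, (1 <= k)%N ->
     vnorm (J k - Jpol P r alpha (mu k))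
       <= beta * vnorm (J k.-1 - Jpol P r alpha (mu k.-1)) + tau) /\
  (beta < 1 -> forall k : nat,
     vnorm (J k - Jpol P r alpha (mu k))
       <= beta ^+ k * vnorm (J 0%N - Jpol P r alpha (mu 0%N)) + tau / (1 - beta)).

Proof.
move=> dFV dapp beta tau.
set B := (1 - alpha)^-1.
have ha0 : 0 <= alpha by case/andP: halpha => h _; exact: ltW.
have hB0 : 0 <= B by rewrite /B invr_ge0 subr_ge0; case/andP: halpha => _ h; exact: ltW.
have hsFV : forall k, mnorm (Mproj Phi (D k)) <= dFV.
  by move=> k; apply: (ub_le_sup hFV); exists k.
have hFV0 : 0 <= dFV := le_trans (mnorm_ge0 _) (hsFV 0%N).
have hMv : forall k (v : 'cV[R]_nS), vnorm (Mproj Phi (D k) *m v) <= dFV * vnorm v.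
  move=> k v; apply: (le_trans (vnorm_mul _ _)); apply: ler_wpM2r; [exact: vnorm_ge0|exact: hsFV].
have hJB : forall nu, vnorm (Jpol P r alpha nu) <= B.
  move=> nu; apply: vnorm_le => // i; have := Jpol_box P r alpha hP0 hP1 hr halpha nu i.
  by case/andP=> h1 h2; rewrite ger0_norm.
have happ : forall k nu, vnorm (Mproj Phi (D k) *m Jpol P r alpha nu - Jpol P r alpha nu) <= dapp.
  move=> k nu; apply: ub_le_sup; last by exists k, nu.
  exists (dFV * B + B) => _ [k' [nu' ->]].
  apply: (le_trans (vnorm_sub _ _)); apply: lerD => //.
  by apply: (le_trans (hMv _ _)); apply: ler_wpM2l.
have happ0 : 0 <= dapp := le_trans (vnorm_ge0 _) (happ 0%N (mu 0%N)).
have fa := mu 0%N.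
have hbeta0 : 0 <= beta by rewrite /beta mulr_ge0 // exprn_ge0.
have htau0 : 0 <= tau.
  have t1 : 0 <= alpha ^+ m + alpha ^+ (m + H - 1) by rewrite addr_ge0 // exprn_ge0.
  have t2 : 0 <= (alpha ^+ m + alpha ^+ (m + H - 1)) / (1 - alpha) by rewrite mulr_ge0.
  by rewrite /tau !addr_ge0 // mulr_ge0.
have step : forall k, vnorm (J k.+1 - Jpol P r alpha (mu k.+1))
    <= beta * vnorm (J k - Jpol P r alpha (mu k)) + tau.
  move=> k.
  set M := Mproj Phi (D k); set Jm := Jpol P r alpha (mu k.+1).
  set y := iter H.-1 (Tbell P r alpha) (J k).
  set z := iter H.-1 (Tbell P r alpha) (Jpol P r alpha (mu k)).
  set X := iter m (Tpol P r alpha (mu k.+1)) y.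
  set e := vnorm (J k - Jpol P r alpha (mu k)).
  have hX : vnorm (X - Jm) <= alpha ^+ m * vnorm (y - Jm).
    rewrite {1}/Jm -(@iter_fix _ _ _ m (Jpol_fix P r alpha hP0 hP1 hr halpha (mu k.+1))).
    apply: iter_contr => // x1 x2; exact: Tpol_contr.
  have hy : vnorm (y - Jm) <= alpha ^+ H.-1 * e + B.
    have -> : y - Jm = (y - z) + (z - Jm) by rewrite addrA subrK.
    apply: (le_trans (vnorm_tri _ _)); apply: lerD.
      apply: iter_contr => // x1 x2; exact: (Tbell_contr P r alpha hP0 hP1 ha0 fa).
    apply: box_dist => //.
      apply: iter_box; last exact: Jpol_box.
      move=> x hx; exact: (Tbell_box P r alpha hP0 hP1 hr halpha fa).
    exact: Jpol_box.
  have hv : vnorm (J k.+1 - Jm) <= dFV * (alpha ^+ m * (alpha ^+ H.-1 * e + B)) + dapp + dFV * ePE.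
    rewrite hJ mulmxDr -/M -/X (zmod_eq _ _ _ _ (M *m Jm)).
    apply: (le_trans (vnorm_tri _ _)); apply: lerD; last by apply: (le_trans (hMv _ _)); apply: ler_wpM2l.
    apply: (le_trans (vnorm_tri _ _)); apply: lerD; last exact: happ.
    rewrite -mulmxBr; apply: (le_trans (hMv _ _)); apply: ler_wpM2l => //.
    apply: (le_trans hX); apply: ler_wpM2l; [exact: exprn_ge0 | exact: hy].
  have eH : (m + H - 1 = m + H.-1)%N by lia.
  move: hv; rewrite /beta /tau eH exprD.
  set a := alpha ^+ m; set b := alpha ^+ H.-1.
  have a0 : 0 <= a by exact: exprn_ge0.
  have b0 : 0 <= b by exact: exprn_ge0.
  have e0 : 0 <= e by exact: vnorm_ge0.
  have hp : 0 <= dFV * a * b * B by rewrite !mulr_ge0.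
  rewrite -/B => hv.
  nra.
split.
  by case => [|k] // _; exact: step.
move=> hb1 k; elim: k => [|k IH].
  rewrite expr0 mul1r lerDl divr_ge0 // subr_ge0; exact: ltW.
apply: (le_trans (step k)).
have hne : 1 - beta != 0 by rewrite subr_eq0 eq_sym lt_eqF.
have -> : beta ^+ k.+1 * vnorm (J 0%N - Jpol P r alpha (mu 0%N)) + tau / (1 - beta)
   = beta * (beta ^+ k * vnorm (J 0%N - Jpol P r alpha (mu 0%N)) + tau / (1 - beta)) + tau.
  by rewrite exprS; field.
apply: lerD => //; exact: ler_wpM2l.
Qed.
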